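(* Let $p\ge 1$ and let $u,v,w\in E^p$. Then for every $\alpha\in[0,1]$, $$D(\alpha u+(1-\alpha)v,\,w)\le \sqrt{2}\,\max\{D(u,w),D(v,w)\}.$$
   Context: A fuzzy subset of $\mathbb{R}^p$ is a function $u:\mathbb{R}^p\to[0,1]$. Its $\alpha$-cut is $[u]_\alpha=\{x\in\mathbb{R}^p: u(x)\ge\alpha\}$ for $\alpha\in(0,1]$, and $[u]_0=\overline{\{x\in\mathbb{R}^p: u(x)>0\}}$. The set $E^p$ of $p$-dimensional fuzzy numbers consists of all fuzzy subsets $u$ of $\mathbb{R}^p$ such that $[u]_\alpha$ is a nonempty compact convex subset of $\mathbb{R}^p$ for every $\alpha\in[0,1]$. For $u,v\in E^p$ and $r\in\mathbb{R}$, $u+v$ and $r\cdot u$ are the elements of $E^p$ determined by $[u+v]_\alpha=\{x+y: x\in[u]_\alpha,\ y\in[v]_\alpha\}$ and $[r\cdot u]_\alpha=\{rx: x\in[u]_\alpha\}$ for all $\alpha\in[0,1]$. The sendograph of $u\in E^p$ is $\mathrm{send}\,u=\{(x,\alpha)\in[u]_0\times[0,1]: u(x)\ge\alpha\}\subset\mathbb{R}^{p+1}$. For nonempty compact $U,V\subset\mathbb{R}^{p+1}$ (with the Euclidean metric $d$), the Hausdorff metric is $H(U,V)=\max\{H^*(U,V),H^*(V,U)\}$ with $H^*(U,V)=\sup_{a\in U}\inf_{b\in V}d(a,b)$. The sendograph metric on $E^p$ is $D(u,v)=H(\mathrm{send}\,u,\mathrm{send}\,v)$. *)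

(* Defs.v *)
From HB Require Import structures.
From mathcomp Require Import all_boot all_order all_algebra.
From mathcomp Require Import all_classical all_reals topology normedtype.
Set Implicit Arguments. Unset Strict Implicit. Unset Printing Implicit Defensive.
Import Order.TTheory GRing.Theory Num.Theory.
Import numFieldNormedType.Exports.
Local Open Scope classical_set_scope.
Local Open Scope ring_scope.

Section Fuzzy.
Variables (R : realType) (p : nat).

Definition pt := 'rV[R]_p.

Definition fuzzy_set (u : pt -> R) : Prop := forall x, 0 <= u x <= 1.

Definition cut (u : pt -> R) (a : R) : set pt :=
  if 0 < a then [set x | a <= u x] else closure [set x | 0 < u x].

Definition convex_set (S : set pt) : Prop :=
  forall x y t, S x -> S y -> 0 <= t <= 1 -> S (t *: x + (1 - t) *: y).

Definition fuzzy_number (u : pt -> R) : Prop :=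
  fuzzy_set u /\
  forall a, 0 <= a <= 1 ->
    cut u a !=set0 /\ compact (cut u a) /\ convex_set (cut u a).

Definition set_add (A B : set pt) : set pt :=
  [set z | exists2 x, A x & exists2 y, B y & z = x + y].
Definition set_scale (r : R) (A : set pt) : set pt := (fun x => r *: x) @` A.

Definition is_fuzzy_add (u v s : pt -> R) : Prop :=
  fuzzy_set s /\ forall a, 0 <= a <= 1 -> cut s a = set_add (cut u a) (cut v a).

Definition is_fuzzy_scale (r : R) (u s : pt -> R) : Prop :=
  fuzzy_set s /\ forall a, 0 <= a <= 1 -> cut s a = set_scale r (cut u a).

Definition edist (a b : pt * R) : R :=
  Num.sqrt (\sum_(i < p) (a.1 ord0 i - b.1 ord0 i) ^+ 2 + (a.2 - b.2) ^+ 2).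

Definition sendograph (u : pt -> R) : set (pt * R) :=
  [set xa | cut u 0 xa.1 /\ 0 <= xa.2 <= 1 /\ xa.2 <= u xa.1].

Definition hausdorff_half (U V : set (pt * R)) : R :=
  sup [set r | exists2 a, U a & r = inf [set d | exists2 b, V b & d = edist a b]].

Definition hausdorff (U V : set (pt * R)) : R :=
  Num.max (hausdorff_half U V) (hausdorff_half V U).

Definition send_metric (u v : pt -> R) : R := hausdorff (sendograph u) (sendograph v).

End Fuzzy.

(* Main.v *)
Require Import Defs.
From HB Require Import structures.
From mathcomp Require Import all_boot all_order all_algebra.
From mathcomp Require Import all_classical all_reals topology normedtype.
From mathcomp Require Import ring lra.
Import Order.TTheory GRing.Theory Num.Theory.
Import numFieldNormedType.Exports.
Local Open Scope classical_set_scope.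
Local Open Scope ring_scope.

Lemma coord_le (R : realType) p (x : 'rV[R]_p) i : `|x ord0 i| <= `|x|.
Proof.
rewrite [X in _ <= X]/Num.norm /= mx_normrE.
exact: (le_bigmax _ (fun ij : 'I_1 * 'I_p => `|x ij.1 ij.2|) (ord0, i)).
Qed.

Lemma bnd (R : realType) p (A : set 'rV[R]_p) : compact A -> exists M, forall x, A x -> `|x| <= M.
Proof.
move=> /compact_bounded [M [_ HM]].
exists (`|M|+1); apply: HM.
by rewrite (le_lt_trans (ler_norm M)) // ltrDl.
Qed.

Section S.
Variables (R : realType) (p : nat).
Implicit Types (u : 'rV[R]_p -> R).
Implicit Types (U V : set ('rV[R]_p * R)).

Definition sqd (a b : 'rV[R]_p * R) : R :=
  \sum_(i < p) (a.1 ord0 i - b.1 ord0 i) ^+ 2 + (a.2 - b.2) ^+ 2.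

Lemma sqd_ge0 a b : 0 <= sqd a b.
Proof. by rewrite addr_ge0 ?sqr_ge0 // sumr_ge0 // => i _; rewrite sqr_ge0. Qed.

Lemma edistE a b : Defs.edist a b = Num.sqrt (sqd a b).
Proof. by []. Qed.

Lemma cut0_of u a x : 0 < a -> cut u a x -> cut u 0 x.
Proof.
rewrite /cut ltxx => a0; rewrite a0 /= => h.
apply: subset_closure => /=; exact: lt_le_trans a0 h.
Qed.

Lemma cut_mono u m b x : 0 <= m <= b -> cut u b x -> cut u m x.
Proof.
move=> /andP[m0 mb].
have [mp|] := ltP 0 m.
  have bp : 0 < b by exact: lt_le_trans mp mb.
  by rewrite /cut mp bp /= => h; exact: le_trans mb h.
move=> m0'; have -> : m = 0 by apply/eqP; rewrite eq_le m0' m0.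
have [bp|] := ltP 0 b; first exact: cut0_of.
move=> b0; have -> : b = 0 by apply/eqP; rewrite eq_le b0 (le_trans m0 mb).
by [].
Qed.

Lemma send_iff u x t : fuzzy_set u ->
  sendograph u (x, t) <-> (0 <= t <= 1 /\ cut u t x).
Proof.
move=> fu; rewrite /sendograph /=; split.
  move=> [c0 [t01 tu]]; split => //.
  rewrite /cut; case: ifP => _; [done | ]. move: c0; rewrite /cut ltxx. done.
move=> [t01 c]; have /andP[t0 _] := t01.
have [tp|] := ltP 0 t.
  split; first exact: cut0_of c.
  by split => //; move: c; rewrite /cut tp.
move=> t0'; have tE : t = 0 by apply/eqP; rewrite eq_le t0' t0.
subst t; split => //; split => //.
by have /andP[] := fu x.
Qed.

Lemma core (al : R) (y z y' z' : 'rV[R]_p) t b1 b2 : 0 <= al <= 1 ->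
  sqd (al *: y + (1 - al) *: z, t) (al *: y' + (1 - al) *: z', Num.min b1 b2)
  <= sqd (y, t) (y', b1) + sqd (z, t) (z', b2).
Proof.
move=> /andP[a0 a1]; rewrite /sqd /= addrACA; apply: lerD.
  rewrite -big_split /=; apply: ler_sum => i _; rewrite !mxE.
  set e := y ord0 i - y' ord0 i; set f := z ord0 i - z' ord0 i.
  have -> : al * y ord0 i + (1 - al) * z ord0 i - (al * y' ord0 i + (1 - al) * z' ord0 i)
    = al * e + (1 - al) * f by rewrite /e /f; ring.
  have h1 : 0 <= al * (1 - al) * (e - f) ^+ 2 by rewrite mulr_ge0 ?sqr_ge0 ?mulr_ge0 ?subr_ge0.
  have h2 : 0 <= (1 - al) * e ^+ 2 by rewrite mulr_ge0 ?sqr_ge0 ?subr_ge0.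
  have h3 : 0 <= al * f ^+ 2 by rewrite mulr_ge0 ?sqr_ge0.
  clearbody e f.
  have -> : e ^+ 2 + f ^+ 2 = (al * e + (1 - al) * f) ^+ 2 + (al * (1 - al) * (e - f) ^+ 2 + (1 - al) * e ^+ 2 + al * f ^+ 2) by ring.
  by rewrite lerDl !addr_ge0.
rewrite minEle; case: ifP => _; [by rewrite lerDl sqr_ge0 | by rewrite lerDr sqr_ge0].
Qed.


Definition IE (V : set ('rV[R]_p * R)) a := [set d | exists2 b, V b & d = Defs.edist a b].

Lemma IE_lb V (a : 'rV[R]_p * R) : lbound (IE V a) 0.
Proof. by move=> d [b _ ->]; exact: sqrtr_ge0. Qed.

Lemma IE_ge0 V (a : 'rV[R]_p * R) : 0 <= inf (IE V a).
Proof.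
have [ne|e0] := pselect (IE V a !=set0); first exact: lb_le_inf (IE_lb V a).
rewrite (_ : IE V a = set0) ?inf0 //.
by apply/seteqP; split => // d Ed; apply: e0; exists d.
Qed.

Lemma halfE U V : hausdorff_half U V = sup [set r | exists2 a, U a & r = inf (IE V a)].
Proof. by []. Qed.

Lemma half_ge0 U V : 0 <= hausdorff_half U V.
Proof.
rewrite halfE; set A := [set r | _].
have [hs|hs] := pselect (has_sup A); last by rewrite sup_out.
have [[r Ar] hu] := hs.
apply: le_trans (ub_le_sup hu Ar).
by case: Ar => a _ ->; exact: IE_ge0.
Qed.

Lemma half_witness U V (a : 'rV[R]_p * R) eps :
  (exists b0, V b0 /\ exists K, forall a', U a' -> Defs.edist a' b0 <= K) ->
  U a -> 0 < eps -> exists2 b, V b & Defs.edist a b < hausdorff_half U V + eps.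
Proof.
move=> [b0 [Vb0 [K HK]]] Ua e0.
have hi : has_inf (IE V a).
  split; first by exists (Defs.edist a b0), b0.
  by exists 0; exact: IE_lb.
have [d [b Vb ->] hd] := inf_adherent e0 hi.
exists b => //; apply: (lt_le_trans hd); rewrite lerD2r halfE.
apply: ub_le_sup; last by exists a.
exists K => r [a' Ua' ->].
apply: le_trans (HK a' Ua').
apply: ge_inf; last by exists b0.
by exists 0; exact: IE_lb.
Qed.

Lemma le_half U V c : 0 <= c ->
  (forall a, U a -> forall e, 0 < e -> exists2 b, V b & Defs.edist a b <= c + e) ->
  hausdorff_half U V <= c.
Proof.
move=> c0 H; rewrite halfE; set A := [set r | _].
have [ne|e0] := pselect (A !=set0); last first.
  rewrite (_ : A = set0) ?sup0 //.
  by apply/seteqP; split => // d Ed; apply: e0; exists d.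
apply: ge_sup => // r [a Ua ->].
apply/ler_addgt0Pr => e e0.
have [b Vb hb] := H a Ua e e0.
apply: le_trans hb; apply: ge_inf; last by exists b.
by exists 0; exact: IE_lb.
Qed.


Lemma sq_bound (X Y A B : R) : `|X| <= A -> `|Y| <= B -> (X - Y) ^+ 2 <= (A + B) ^+ 2.
Proof.
move=> hX hY.
have h : `|X - Y| <= A + B := le_trans (ler_normB X Y) (lerD hX hY).
have h0 : 0 <= `|X - Y| := normr_ge0 _.
rewrite -(real_normK (num_real (X - Y))).
have h1 : 0 <= (A + B - `|X - Y|) * (A + B + `|X - Y|).
  by rewrite mulr_ge0 // ?subr_ge0 // addr_ge0 // (le_trans h0 h).
have -> : (A + B) ^+ 2 = `|X - Y| ^+ 2 + (A + B - `|X - Y|) * (A + B + `|X - Y|) by ring.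
by rewrite lerDl.
Qed.

Lemma send_bounded u : fuzzy_number u -> forall b0,
  exists K, forall a', sendograph u a' -> Defs.edist a' b0 <= K.
Proof.
move=> [fu hu] b0.
have h01 : 0 <= (0:R) <= 1 by apply/andP; split; [exact: lexx | exact: ler01].
have [_ [hc _]] := hu 0 h01.
have [M HM] := @bnd R p _ hc.
exists (Num.sqrt (\sum_(i < p) (M + `|b0.1 ord0 i|) ^+ 2 + (1 + `|b0.2|) ^+ 2)).
move=> [x t] [c0 [/andP[t0 t1] _]].
rewrite edistE; apply: ler_wsqrtr; apply: lerD.
  apply: ler_sum => i _ /=; apply: sq_bound => //.
  exact: le_trans (@coord_le R p x i) (HM x c0).
apply: sq_bound => //; rewrite ger0_norm //.
Qed.

Lemma send_ne u : fuzzy_number u -> exists a, sendograph u a.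
Proof.
move=> [fu hu].
have h01 : 0 <= (0:R) <= 1 by apply/andP; split; [exact: lexx | exact: ler01].
have [[x cx] _] := hu 0 h01.
exists (x, 0); split => //; split; first by rewrite lexx ler01.
by have /andP[] := fu x.
Qed.

Lemma fin (M e : R) (a c a1 b1 a2 b2 : 'rV[R]_p * R) : 0 <= M -> 0 < e ->
  sqd a c <= sqd a1 b1 + sqd a2 b2 ->
  Defs.edist a1 b1 < M + e / Num.sqrt 2 -> Defs.edist a2 b2 < M + e / Num.sqrt 2 ->
  Defs.edist a c <= Num.sqrt 2 * M + e.
Proof.
move=> M0 e0 hs.
have s2 : 0 < Num.sqrt 2 :> R by rewrite sqrtr_gt0 ltr0n.
set e' := e / Num.sqrt 2.
have e'0 : 0 < e' by rewrite divr_gt0.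
have hi : forall a b, Defs.edist a b < M + e' -> sqd a b <= (M + e') ^+ 2.
  move=> a' b'; rewrite edistE => h.
  rewrite -(sqr_sqrtr (sqd_ge0 a' b')).
  have h0 := sqrtr_ge0 (sqd a' b').
  set q := Num.sqrt _ in h h0 *.
  have h1 : 0 <= (M + e' - q) * (M + e' + q).
    by rewrite mulr_ge0 // ?subr_ge0 ?(ltW h) // addr_ge0 // addr_ge0 // ltW.
  have -> : (M + e') ^+ 2 = q ^+ 2 + (M + e' - q) * (M + e' + q) by ring.
  by rewrite lerDl.
move=> /hi h1 /hi h2.
rewrite edistE.
apply: le_trans (ler_wsqrtr (le_trans hs (lerD h1 h2))) _.
have -> : (M + e') ^+ 2 + (M + e') ^+ 2 = 2 * (M + e') ^+ 2 by ring.
rewrite sqrtrM ?ler0n // sqrtr_sqr ger0_norm; last by rewrite addr_ge0 // ltW.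
rewrite mulrDr /e' mulrCA divff ?mulr1 //; exact: lt0r_neq0.
Qed.

End S.
Arguments sqd_ge0 {R p}.
Arguments edistE {R p}.
Arguments cut0_of {R p}.
Arguments cut_mono {R p u m b x}.
Arguments send_iff {R p u}.
Arguments core {R p al}.
Arguments IE_lb {R p}.
Arguments IE_ge0 {R p}.
Arguments halfE {R p}.
Arguments half_ge0 {R p}.
Arguments half_witness {R p U V a eps}.
Arguments le_half {R p U V c}.
Arguments send_bounded {R p u}.
Arguments send_ne {R p u}.
Arguments fin {R p M e a c a1 b1 a2 b2}.

Theorem corollary2p1 (R : realType) (p : nat) (hp : (1 <= p)%N)
  (u v w : 'rV[R]_p -> R)
  (hu : fuzzy_number u) (hv : fuzzy_number v) (hw : fuzzy_number w)
  (alpha : R) (halpha : 0 <= alpha <= 1)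
  (au bv s : 'rV[R]_p -> R)
  (hau : is_fuzzy_scale alpha u au)
  (hbv : is_fuzzy_scale (1 - alpha) v bv)
  (hs : is_fuzzy_add au bv s) :
  send_metric s w <= Num.sqrt 2 * Num.max (send_metric u w) (send_metric v w).
Proof.
have fu := hu.1; have fv := hv.1; have fw := hw.1; have fs := hs.1.
set M := Num.max (send_metric u w) (send_metric v w).
have M0 : 0 <= M by rewrite le_max /send_metric /hausdorff le_max half_ge0.
have B1 : hausdorff_half (sendograph u) (sendograph w) <= M.
  by rewrite le_max /send_metric /hausdorff !le_max lexx.
have B2 : hausdorff_half (sendograph w) (sendograph u) <= M.
  by rewrite le_max /send_metric /hausdorff !le_max lexx orbT.
have B3 : hausdorff_half (sendograph v) (sendograph w) <= M.
  by rewrite le_max /send_metric /hausdorff !le_max lexx !orbT.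
have B4 : hausdorff_half (sendograph w) (sendograph v) <= M.
  by rewrite le_max /send_metric /hausdorff !le_max lexx !orbT.
have hyp : forall f g : 'rV[R]_p -> R, fuzzy_number f -> fuzzy_number g ->
    exists b0, sendograph g b0 /\ exists K, forall a', sendograph f a' -> Defs.edist a' b0 <= K.
  move=> f g hf hg; have [b0 Vb0] := send_ne hg; exists b0; split => //.
  exact: send_bounded hf b0.
have s20 : 0 < Num.sqrt 2 :> R by rewrite sqrtr_gt0 ltr0n.
have cM : 0 <= Num.sqrt 2 * M by rewrite mulr_ge0 // ltW.
have m01 : forall b1 b2 : R, 0 <= b1 <= 1 -> 0 <= b2 <= 1 -> 0 <= Num.min b1 b2 <= 1.
  by move=> b1 b2 /andP[h1 h1'] /andP[h2 h2']; rewrite le_min ge_min h1 h2 h1'.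
have mb1 : forall b1 b2 : R, 0 <= b1 <= 1 -> 0 <= b2 <= 1 -> 0 <= Num.min b1 b2 <= b1.
  move=> b1 b2 h1 h2; have /andP[-> _] := m01 _ _ h1 h2; by rewrite ge_min lexx.
have mb2 : forall b1 b2 : R, 0 <= b1 <= 1 -> 0 <= b2 <= 1 -> 0 <= Num.min b1 b2 <= b2.
  move=> b1 b2 h1 h2; have /andP[-> _] := m01 _ _ h1 h2; by rewrite ge_min lexx orbT.
rewrite /send_metric /hausdorff ge_max; apply/andP; split; apply: le_half => // -[x t] ha e e0.
- have [t01 cs] := (send_iff x t fs).1 ha.
  move: cs; rewrite (hs.2 t t01) => -[x1 c1 [x2 c2 ->]].
  move: c1; rewrite (hau.2 t t01) => -[y cy <-].
  move: c2; rewrite (hbv.2 t t01) => -[z cz <-].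
  have e'0 : 0 < e / Num.sqrt 2 by rewrite divr_gt0.
  have [[y' b1] Wy hy] := half_witness (hyp _ _ hu hw) ((send_iff y t fu).2 (conj t01 cy)) e'0.
  have [[z' b2] Wz hz] := half_witness (hyp _ _ hv hw) ((send_iff z t fv).2 (conj t01 cz)) e'0.
  have [b01 cy'] := (send_iff y' b1 fw).1 Wy.
  have [b02 cz'] := (send_iff z' b2 fw).1 Wz.
  exists (alpha *: y' + (1 - alpha) *: z', Num.min b1 b2).
    apply/(send_iff _ _ fw); split; first exact: m01.
    apply: ((hw.2 _ (m01 _ _ b01 b02)).2.2 y' z' alpha) => //.
      exact: cut_mono (mb1 _ _ b01 b02) cy'.
    exact: cut_mono (mb2 _ _ b01 b02) cz'.
  apply: (fin M0 e0 (core y z y' z' t b1 b2 halpha)).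
    exact: lt_le_trans hy (lerD B1 (lexx _)).
  exact: lt_le_trans hz (lerD B3 (lexx _)).
- have [t01 cw] := (send_iff x t fw).1 ha.
  have e'0 : 0 < e / Num.sqrt 2 by rewrite divr_gt0.
  have [[y b1] Uy hy] := half_witness (hyp _ _ hw hu) ha e'0.
  have [[z b2] Vz hz] := half_witness (hyp _ _ hw hv) ha e'0.
  have [b01 cy] := (send_iff y b1 fu).1 Uy.
  have [b02 cz] := (send_iff z b2 fv).1 Vz.
  have hm := m01 _ _ b01 b02.
  exists (alpha *: y + (1 - alpha) *: z, Num.min b1 b2).
    apply/(send_iff _ _ fs); split => //.
    rewrite (hs.2 _ hm); exists (alpha *: y).
      by rewrite (hau.2 _ hm); exists y => //; exact: cut_mono (mb1 _ _ b01 b02) cy.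
    exists ((1 - alpha) *: z) => //.
    by rewrite (hbv.2 _ hm); exists z => //; exact: cut_mono (mb2 _ _ b01 b02) cz.
  have -> : (x, t) = (alpha *: x + (1 - alpha) *: x, t).
    by congr pair; rewrite -scalerDl addrC subrK scale1r.
  apply: (fin M0 e0 (core x x y z t b1 b2 halpha)).
    exact: lt_le_trans hy (lerD B2 (lexx _)).
  exact: lt_le_trans hz (lerD B4 (lexx _)).
Qed.
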